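(* In the roundabout exploration process described in the context (with $k\ge 1$), let $t=\lfloor N/(2k)\rfloor$. Then $|A(t)|\le 6k$.
   Context: Let $n\ge 2$ and $k\ge 1$ be natural numbers, $T$ a tree on an $n$-element vertex set $V$, and $N=2(n-1)$. Fix a root $r$ and a DFS tour of $T$ starting and ending at $r$ that traverses each edge of $T$ exactly twice, giving a cyclic vertex sequence $(v_1,\dots,v_N,v_{N+1})$ with $v_{N+1}=v_1=r$, and tour edges $e_i=\{v_i,v_{i+1}\}$ for $i\in[N]$. For $i,j\in[N]$ the circular interval $[\![i,j]\!]$ is $\{i,i+1,\dots,j\}$ if $i\le j$ and $\{i,\dots,N,1,\dots,j\}$ if $i>j$. Let $\langle G_1,\dots,G_N\rangle$ be graphs on $V$, each containing all but at most $k$ edges of $T$. Roundabout exploration process: agents $a_1,\dots,a_N$ with initial states $s_i(0)=i$. For steps $t=1,\dots,N$: (Movement) for every $i\in[N]$, if $s_i(t-1)=q$ then $s_i(t)=(q\bmod N)+1$ if $e_q\in E(G_t)$, and $s_i(t)=q$ otherwise. Let $D_i(t)=[\![i,s_i(t)]\!]$ and $D_i(0)=\{i\}$. (Elimination) $A(0)=\{a_1,\dots,a_N\}$; $A(t)$ is obtained from $A(t-1)$ by repeatedly removing an arbitrary agent $a_i$ of the current set with $D_i(t)\subseteq\bigcup D_j(t)$ over the other agents $a_j$ of the current set, until no such agent remains. *)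

(* Defs.v *)
From mathcomp Require Import all_boot.
Set Implicit Arguments. Unset Strict Implicit. Unset Printing Implicit Defensive.

Definition simple_graph (T : finType) (E : rel T) : Prop :=
  symmetric E /\ irreflexive E.

Definition is_tree (T : finType) (E : rel T) : Prop :=
  simple_graph E /\
  (forall x y : T, connect E x y) /\
  (forall c : seq T, 3 <= size c -> ~ ucycle E c).

Definition missing_edges (n : nat) (Tr G : rel 'I_n) : nat :=
  #|[set p : 'I_n * 'I_n | (p.1 < p.2) && Tr p.1 p.2 && ~~ G p.1 p.2]|.

Definition tourlen (n : nat) : nat := 2 * (n - 1).

(* v : nat -> 'I_n encodes (v_1, ..., v_{N+1}) (values at 1..N+1 are used).
   It is a closed walk from r to r in the tree traversing each tree edge
   exactly twice. *)
Definition dfs_tour (n : nat) (Tr : rel 'I_n) (r : 'I_n) (v : nat -> 'I_n) : Prop :=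
  let N := tourlen n in
  [/\ v 1 = r, v N.+1 = r,
      (forall q, 1 <= q <= N -> Tr (v q) (v q.+1)) &
      (forall x y : 'I_n, Tr x y ->
         #|[set q : 'I_N.+1 | (1 <= q) && ([set v q; v q.+1] == [set x; y])]| = 2)].

Definition cint (N i j x : nat) : bool :=
  if i <= j then (i <= x <= j) else ((i <= x <= N) || (1 <= x <= j)).

Section Process.
Variables (n : nat) (v : nat -> 'I_n) (G : nat -> rel 'I_n).
Local Notation N := (tourlen n).

(* one movement at step t of an agent in state q: e_q = {v_q, v_{q+1}} *)
Definition move (t q : nat) : nat :=
  if G t (v q) (v q.+1) then (q %% N).+1 else q.

Fixpoint state (i t : nat) : nat :=
  match t with
  | 0 => i
  | t'.+1 => move t'.+1 (state i t')
  end.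

Definition inD (i t x : nat) : bool := cint N i (state i t) x.

(* Agents are indexed by 1..N, represented in 'I_N.+1 (index 0 unused). *)
Definition agents : {set 'I_N.+1} := [set i : 'I_N.+1 | 0 < i].

Definition removable (t : nat) (S : {set 'I_N.+1}) (i : 'I_N.+1) : Prop :=
  i \in S /\
  (forall x : nat, inD i t x -> exists j : 'I_N.+1, [/\ j \in S, j != i & inD j t x]).

Inductive elim_reach (t : nat) : {set 'I_N.+1} -> {set 'I_N.+1} -> Prop :=
| elim_refl S : elim_reach t S S
| elim_step S i S' : removable t S i -> elim_reach t (S :\ i) S' -> elim_reach t S S'.

Definition elim_outcome (t : nat) (S S' : {set 'I_N.+1}) : Prop :=
  elim_reach t S S' /\ (forall i, ~ removable t S' i).

Definition valid_run (A : nat -> {set 'I_N.+1}) : Prop :=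
  A 0 = agents /\ (forall t, 1 <= t <= N -> elim_outcome t (A t.-1) (A t)).

End Process.

(* Main.v *)
Require Import Defs.
From mathcomp Require Import all_boot zify.
Set Implicit Arguments. Unset Strict Implicit. Unset Printing Implicit Defensive.

Definition dlt (N a b : nat) := if a <= b then b - a else b + N - a.

Lemma cint_dlt N j s y : 1 <= j <= N -> 1 <= s <= N ->
  cint N j s y = (1 <= y <= N) && (dlt N j y <= dlt N j s).
Proof. rewrite /cint /dlt => H1 H2. repeat case: ifP => ?; lia. Qed.

Lemma dlt_sub N a x : 1 <= a <= N -> 1 <= x <= N -> dlt N a x < N.
Proof. rewrite /dlt; case: ifP => ?; lia. Qed.

Lemma state_range n (v : nat -> 'I_n) G i t :
  0 < tourlen n -> 1 <= i <= tourlen n -> 1 <= state v G i t <= tourlen n.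
Proof.
move=> N0 Hi; elim: t => [//|t IH] /=.
rewrite /move; case: ifP => // _.
have := ltn_pmod (state v G i t) N0; lia.
Qed.

Lemma state_same n (v : nat -> 'I_n) G i j t t' :
  t <= t' -> state v G i t = state v G j t -> state v G i t' = state v G j t'.
Proof.
move=> le; elim: t' le => [|t' IH]; first by rewrite leqn0 => /eqP ->.
rewrite leq_eqVlt => /orP [/eqP <- //| lt] E /=.
by rewrite (IH lt E).
Qed.

Lemma dlt_step N i s : 1 <= i <= N -> 1 <= s <= N -> (dlt N i s).+1 < N ->
  dlt N i (s %% N).+1 = (dlt N i s).+1.
Proof.
move=> Hi Hs Hd.
have -> : s %% N = if s < N then s else 0.
  case: ifP => h; first by rewrite modn_small.
  have -> : s = N by lia. by rewrite modnn.
move: Hd; case: ifP => hs; rewrite /dlt; repeat case: ifP => ?; lia.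
Qed.

Definition blk n (v : nat -> 'I_n) G i t : nat :=
  \sum_(tau < t) ~~ G tau.+1 (v (state v G i tau)) (v (state v G i tau).+1).

Lemma dlt_blk n (v : nat -> 'I_n) G i t :
  1 <= i <= tourlen n -> t < tourlen n ->
  dlt (tourlen n) i (state v G i t) + blk v G i t = t.
Proof.
move=> Hi; elim: t => [|t IH] Ht.
  by rewrite /blk big_ord0 /dlt leqnn subnn.
have N0 : 0 < tourlen n by lia.
have IH' := IH (ltnW Ht).
have Hs := state_range v G t N0 Hi.
rewrite /blk big_ord_recr /= -/(blk v G i t) /move.
case: ifP => /= hG.
  rewrite dlt_step //; lia.
lia.
Qed.

Lemma inD_dlt n (v : nat -> 'I_n) G i t y :
  0 < tourlen n -> 1 <= i <= tourlen n ->
  inD v G i t y = (1 <= y <= tourlen n) && (dlt (tourlen n) i y <= dlt (tourlen n) i (state v G i t)).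
Proof. move=> N0 Hi; rewrite /inD cint_dlt //; exact: state_range. Qed.

Lemma t3 (N a b c x y ea eb ec : nat) : 1 <= a <= N -> 1 <= b <= N -> 1 <= c <= N -> 1 <= x <= N -> 1 <= y <= N ->
  dlt N a x <= ea -> dlt N b x <= eb -> dlt N c x <= ec -> dlt N c x <= dlt N a x ->
  ec - dlt N c x <= eb - dlt N b x -> ea < N -> eb < N -> ec < N -> dlt N c y <= ec -> (dlt N a y <= ea) || (dlt N b y <= eb).
Proof. rewrite /dlt. repeat case: ifP => ?; lia. Qed.

Lemma agentsP n (j : 'I_(tourlen n).+1) : j \in agents n -> 1 <= j <= tourlen n.
Proof. rewrite inE => ->; by rewrite -ltnS ltn_ord. Qed.

Lemma no_cover n (v : nat -> 'I_n) G t (S : {set 'I_(tourlen n).+1})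
  (Hno : forall i, ~ removable v G t S i) (HS : S \subset agents n) (N0 : 0 < tourlen n)
  (c a b : 'I_(tourlen n).+1) (x : nat) :
  c \in S -> a \in S -> b \in S -> a != c -> b != c ->
  inD v G a t x -> inD v G b t x -> inD v G c t x ->
  dlt (tourlen n) c x <= dlt (tourlen n) a x ->
  dlt (tourlen n) c (state v G c t) - dlt (tourlen n) c x <=
  dlt (tourlen n) b (state v G b t) - dlt (tourlen n) b x -> False.
Proof.
move=> cS aS bS ac bc.
have Hc := agentsP (subsetP HS _ cS).
have Ha := agentsP (subsetP HS _ aS).
have Hb := agentsP (subsetP HS _ bS).
rewrite !inD_dlt // => /andP [Hx Dax] /andP [_ Dbx] /andP [_ Dcx] H1 H2.
apply: (Hno c); split => // y.
rewrite inD_dlt // => /andP [Hy Dcy].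
have := t3 Ha Hb Hc Hx Hy Dax Dbx Dcx H1 H2.
have := dlt_sub Ha (state_range v G t N0 Ha).
have := dlt_sub Hb (state_range v G t N0 Hb).
have := dlt_sub Hc (state_range v G t N0 Hc).
move=> h1 h2 h3 /(_ h3 h2 h1 Dcy) /orP [h|h].
  by exists a; split => //; rewrite inD_dlt // Hy.
by exists b; split => //; rewrite inD_dlt // Hy.
Qed.

Lemma distinct_states n (v : nat -> 'I_n) G t (S : {set 'I_(tourlen n).+1})
  (Hno : forall i, ~ removable v G t S i) (HS : S \subset agents n) (N0 : 0 < tourlen n)
  (i j : 'I_(tourlen n).+1) :
  i \in S -> j \in S -> i != j -> state v G i t != state v G j t.
Proof.
move=> iS jS ij; apply/negP => /eqP E.
have Hi := agentsP (subsetP HS _ iS).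
have Hj := agentsP (subsetP HS _ jS).
have Ri := state_range v G t N0 Hi.
have Rj := state_range v G t N0 Hj.
have inDi : inD v G i t (state v G i t) by rewrite inD_dlt // Ri leqnn.
have inDj : inD v G j t (state v G j t) by rewrite inD_dlt // Rj leqnn.
case: (leqP (dlt (tourlen n) j (state v G j t)) (dlt (tourlen n) i (state v G i t))) => h.
  apply: (@no_cover n v G t S Hno HS N0 j i i (state v G j t)) => //; rewrite ?subnn //.
  all: rewrite -?E //.
  by rewrite {1}E.
apply: (@no_cover n v G t S Hno HS N0 i j j (state v G i t)) => //; rewrite ?subnn 1?eq_sym //.
  all: rewrite ?E //.
  by move: h; rewrite E; apply: ltnW.
Qed.

Lemma pick3 (b1 b2 b3 f1 f2 f3 : nat) :
 [|| ((b1 <= b2) || (b1 <= b3)) && ((f1 <= f2) || (f1 <= f3)),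
     ((b2 <= b1) || (b2 <= b3)) && ((f2 <= f1) || (f2 <= f3)) |
     ((b3 <= b1) || (b3 <= b2)) && ((f3 <= f1) || (f3 <= f2))].
Proof. lia. Qed.

Lemma cover2 n (v : nat -> 'I_n) G t (S : {set 'I_(tourlen n).+1})
  (Hno : forall i, ~ removable v G t S i) (HS : S \subset agents n) (N0 : 0 < tourlen n) x :
  #|[set j in S | inD v G j t x]| <= 2.
Proof.
rewrite leqNgt; apply/negP => /card_gt2P [a1 [a2 [a3 [[h1 h2 h3] [d12 d23 d31]]]]].
move: h1 h2 h3; rewrite !inE => /andP [s1 i1] /andP [s2 i2] /andP [s3 i3].
have d21 : a2 != a1 by rewrite eq_sym.
have d32 : a3 != a2 by rewrite eq_sym.
have d13 : a1 != a3 by rewrite eq_sym.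
have NC := @no_cover n v G t S Hno HS N0.
set e := fun j : 'I_(tourlen n).+1 => dlt (tourlen n) j (state v G j t).
have := pick3 (dlt (tourlen n) a1 x) (dlt (tourlen n) a2 x) (dlt (tourlen n) a3 x)
  (e a1 - dlt (tourlen n) a1 x) (e a2 - dlt (tourlen n) a2 x) (e a3 - dlt (tourlen n) a3 x).
case/or3P => /andP [/orP [k1|k1] /orP [k2|k2]].
- exact: (NC a1 a2 a2 x).
- exact: (NC a1 a2 a3 x).
- exact: (NC a1 a3 a2 x).
- exact: (NC a1 a3 a3 x).
- exact: (NC a2 a1 a1 x).
- exact: (NC a2 a1 a3 x).
- exact: (NC a2 a3 a1 x).
- exact: (NC a2 a3 a3 x).
- exact: (NC a3 a1 a1 x).
- exact: (NC a3 a1 a2 x).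
- exact: (NC a3 a2 a1 x).
- exact: (NC a3 a2 a2 x).
Qed.

Lemma sum_bool_card (T : finType) (A : {set T}) (P : pred T) :
  \sum_(x in A) (P x : nat) = #|[set x in A | P x]|.
Proof.
rewrite -sum1dep_card big_mkcondr /=; apply: eq_bigr => x _; by case: (P x).
Qed.

Lemma card_sum_bool (T : finType) (A : {set T}) :
  #|A| = \sum_x (x \in A : nat).
Proof.
rewrite -sum1_card big_mkcond /=; apply: eq_bigr => x _; by case: (x \in A).
Qed.

Lemma card_agents n : #|agents n| = tourlen n.
Proof.
rewrite card_sum_bool big_ord_recl /= inE /= add0n.
rewrite (eq_bigr (fun _ => 1)) ?sum_nat_const ?card_ord ?muln1 // => i _.
by rewrite inE.
Qed.

Definition Dset n (v : nat -> 'I_n) G t j : {set 'I_(tourlen n).+1} :=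
  [set y : 'I_(tourlen n).+1 | inD v G j t y].

Lemma sumD_bound n (v : nat -> 'I_n) G t (S : {set 'I_(tourlen n).+1})
  (Hno : forall i, ~ removable v G t S i) (HS : S \subset agents n) (N0 : 0 < tourlen n) :
  \sum_(j in S) #|Dset v G t j| <= 2 * tourlen n.
Proof.
rewrite (eq_bigr (fun j : 'I_(tourlen n).+1 => \sum_(y : 'I_(tourlen n).+1) (inD v G j t y : nat))); last first.
  by move=> j _; rewrite card_sum_bool; apply: eq_bigr => y _; rewrite inE.
rewrite exchange_big /= big_ord_recl.
rewrite (eq_bigr (fun j : 'I_(tourlen n).+1 => 0) (P := fun j => j \in S)); last first.
  move=> j jS; have Hj := agentsP (subsetP HS _ jS).
  by rewrite inD_dlt //= ltnn.
rewrite big1 // add0n.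
apply: (@leq_trans (\sum_(y < tourlen n) 2)); last by rewrite sum_nat_const card_ord mulnC.
apply: leq_sum => y _; rewrite sum_bool_card; exact: cover2.
Qed.

Lemma Dset_lower n (v : nat -> 'I_n) G t (j : 'I_(tourlen n).+1) :
  0 < tourlen n -> 1 <= j <= tourlen n ->
  (dlt (tourlen n) j (state v G j t)).+1 <= #|Dset v G t j|.
Proof.
move=> N0 Hj.
set e := dlt (tourlen n) j (state v G j t).
have Rs := state_range v G t N0 Hj.
have eN : e < tourlen n by apply: dlt_sub.
pose w (u : nat) := if j + u <= tourlen n then j + u else j + u - tourlen n.
pose f (u : 'I_e.+1) : 'I_(tourlen n).+1 := inord (w u).
have wB (u : 'I_e.+1) : w u < (tourlen n).+1.
  have := ltn_ord u; rewrite /w; case: ifP => ?; lia.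
have finj : injective f.
  move=> u u' /(congr1 (@nat_of_ord _)); rewrite /f !inordK //.
  have := ltn_ord u; have := ltn_ord u'; rewrite /w => h1 h2 h3.
  apply: val_inj => /=; move: h1 h2 h3; repeat case: ifP => ?; lia.
have <- : #|f @: 'I_e.+1| = e.+1 by rewrite card_imset // card_ord.
apply: subset_leq_card; apply/subsetP => y /imsetP [u _ ->].
rewrite inE inD_dlt // /f inordK //.
have := ltn_ord u; rewrite -/e; rewrite /w /dlt.
repeat case: ifP => ?; lia.
Qed.

Definition Qset n (v : nat -> 'I_n) (G' : rel 'I_n) : {set 'I_(tourlen n).+1} :=
  [set q : 'I_(tourlen n).+1 | (1 <= q) && ~~ G' (v q) (v q.+1)].

Lemma blk_bound n (v : nat -> 'I_n) G t (S : {set 'I_(tourlen n).+1})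
  (Hno : forall i, ~ removable v G t S i) (HS : S \subset agents n) (N0 : 0 < tourlen n) K :
  (forall tau, tau < t -> #|Qset v (G tau.+1)| <= K) ->
  \sum_(j in S) blk v G j t <= t * K.
Proof.
move=> HQ; rewrite /blk exchange_big /=.
apply: (@leq_trans (\sum_(tau < t) K)); last by rewrite sum_nat_const card_ord.
apply: leq_sum => tau _; rewrite sum_bool_card.
apply: leq_trans (HQ tau (ltn_ord tau)).
set D := [set _ in S | _].
pose g (j : 'I_(tourlen n).+1) : 'I_(tourlen n).+1 := inord (state v G j tau).
have Rg j : j \in S -> state v G j tau < (tourlen n).+1.
  move=> jS; have Hj := agentsP (subsetP HS _ jS).
  have := state_range v G tau N0 Hj; lia.
have ginj : {in D &, injective g}.
  move=> i j; rewrite !inE => /andP [iS _] /andP [jS _] /(congr1 (@nat_of_ord _)).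
  rewrite /g !inordK ?Rg // => E.
  apply/eqP; apply/negPn/negP => ij.
  have := distinct_states Hno HS N0 iS jS ij.
  by rewrite (state_same (ltnW (ltn_ord tau)) E) eqxx.
rewrite -(card_in_imset ginj); apply: subset_leq_card.
apply/subsetP => q /imsetP [j]; rewrite inE => /andP [jS hb] ->.
have Hj := agentsP (subsetP HS _ jS).
have := state_range v G tau N0 Hj.
by rewrite inE /g inordK ?Rg // => /andP [-> _].
Qed.

Lemma Qbound n (Tr : rel 'I_n) r (v : nat -> 'I_n) (G' : rel 'I_n) :
  is_tree Tr -> dfs_tour Tr r v -> simple_graph G' ->
  #|Qset v G'| <= 2 * missing_edges Tr G'.
Proof.
move=> [[Tsym Tirr] _] [_ _ Hedge Hcnt] [Gsym _].
set M := [set p : 'I_n * 'I_n | (p.1 < p.2) && Tr p.1 p.2 && ~~ G' p.1 p.2].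
pose Pp (p : 'I_n * 'I_n) : {set 'I_(tourlen n).+1} :=
  [set q : 'I_(tourlen n).+1 | (1 <= q) && ([set v q; v q.+1] == [set p.1; p.2])].
have -> : missing_edges Tr G' = #|M| by [].
rewrite -sum1_card.
apply: (@leq_trans (\sum_(q in Qset v G') \sum_(p in M) (q \in Pp p : nat))).
  apply: leq_sum => q; rewrite inE => /andP [q1 hG].
  have qN : q <= tourlen n by rewrite -ltnS ltn_ord.
  have hT : Tr (v q) (v q.+1) by apply: Hedge; rewrite q1 qN.
  have neq : v q != v q.+1 by apply/negP => /eqP E; rewrite E Tirr in hT.
  case: (ltngtP (v q) (v q.+1)) => [lt|gt|/val_inj E]; last by rewrite E eqxx in neq.
  - rewrite (bigD1 (v q, v q.+1)) /=; last by rewrite inE /= lt hT hG.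
    by rewrite inE q1 eqxx.
  - rewrite (bigD1 (v q.+1, v q)) /=; last by rewrite inE /= gt Tsym hT Gsym hG.
    by rewrite inE q1 setUC eqxx.
rewrite exchange_big /=.
apply: (@leq_trans (\sum_(p in M) 2)); last by rewrite sum_nat_const mulnC.
apply: leq_sum => p; rewrite inE => /andP [/andP [_ hT] _].
rewrite sum_bool_card -(Hcnt _ _ hT).
apply: subset_leq_card; apply/subsetP => q; rewrite !inE => /andP [_ ->] //.
Qed.

Lemma elim_reach_sub n (v : nat -> 'I_n) G t S S' :
  elim_reach v G t S S' -> S' \subset S.
Proof.
elim => [S0|S0 i S1 _ _ IH]; first exact: subxx.
by apply: subset_trans IH _; apply: subsetDl.
Qed.

Lemma run_sub n (v : nat -> 'I_n) G A :
  valid_run v G A -> forall t, t <= tourlen n -> A t \subset agents n.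
Proof.
move=> [A0 Hrun]; elim => [|t IH] Ht; first by rewrite A0.
have [H _] := Hrun t.+1 Ht.
apply: subset_trans (elim_reach_sub H) _; exact: IH (ltnW Ht).
Qed.

Unset Implicit Arguments.

Theorem corollary9 (n k : nat) (Tr : rel 'I_n) (r : 'I_n) (v : nat -> 'I_n)
    (G : nat -> rel 'I_n) (A : nat -> {set 'I_(tourlen n).+1}) :
  2 <= n -> 1 <= k ->
  is_tree Tr ->
  dfs_tour Tr r v ->
  (forall t, 1 <= t <= tourlen n -> simple_graph (G t)) ->
  (forall t, 1 <= t <= tourlen n -> missing_edges Tr (G t) <= k) ->
  valid_run v G A ->
  #|A (tourlen n %/ (2 * k))| <= 6 * k.
Proof.
move=> n2 k1 Htree Htour Hsimp Hmiss Hrun.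
have N2 : 2 <= tourlen n by rewrite /tourlen; lia.
have N0 : 0 < tourlen n by lia.
set t := tourlen n %/ (2 * k).
have Hdiv := divn_eq (tourlen n) (2 * k).
have Hmod : tourlen n %% (2 * k) < 2 * k by apply: ltn_pmod; lia.
rewrite -/t in Hdiv.
have tN : t < tourlen n by nia.
case: (posnP t) => [t0|tpos].
  rewrite t0; case: Hrun => -> _; rewrite card_agents; nia.
have [_ Hno] : elim_outcome v G t (A t.-1) (A t).
  by case: Hrun => _; apply; rewrite tpos ltnW.
have HS := run_sub Hrun (ltnW tN).
set S := A t in Hno HS *.
have Hb := @blk_bound n v G t S Hno HS N0 (2 * k).
have Hb' : \sum_(j in S) blk v G j t <= t * (2 * k).
  apply: Hb => tau ltau.
  apply: leq_trans (Qbound Htree Htour (Hsimp tau.+1 _)) _.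
    by lia.
  by rewrite leq_pmul2l // Hmiss //=; lia.
have HD := sumD_bound Hno HS N0.
have Hsum : #|S| * t.+1 <= \sum_(j in S) #|Dset v G t j| + \sum_(j in S) blk v G j t.
  rewrite -big_split /= -sum_nat_const.
  apply: leq_sum => j jS.
  have Hj := agentsP (subsetP HS _ jS).
  have := Dset_lower v G t N0 Hj.
  have := dlt_blk v G Hj tN.
  move=> h1 h2; by rewrite -{1}h1 -addSn leq_add2r.
have Hf : #|S| * t.+1 < (6 * k) * t.+1 by nia.
by rewrite ltn_pmul2r in Hf; [apply: ltnW | ].
Qed.
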